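(* Let $(R,B)$ be an EIC problem with problem graph $G=(V,E)$ and sender neighborhoods $N_1,\dots,N_n$, and let $\mathscr C=\{V(C): C \text{ is a maximal clique in } G|_{N_i}\text{ for some } i\}$. For every cover $\mathcal C=\{C_j\}\subseteq\mathscr C$ of $V$, there is a neighborhood partition $(\tilde N_1,\dots,\tilde N_n)$ such that $$\sum_{C_j\in\mathcal C}\chi\big(\overline{G|_{C_j}}\big)\ge\sum_{i=1}^n\chi\big(\overline{G|_{\tilde N_i}}\big).$$
   Context: An EIC problem is a pair $(R,B)$ of matrices in $\mathbb{F}_2^{n\times m}$ with disjoint supports (node $u$ needs block $a$ iff $R_{ua}=1$, has it iff $B_{ua}=1$). $P=\{(u,a):R_{ua}=1\}$. The problem graph $G=(V,E)$ has vertices $V=\{v_{(u,a)}:(u,a)\in P\}$ and a directed edge from $v_{(u,a)}$ to $v_{(w,b)}$ iff $B_{ub}=1$ or $a=b$; $G|_S$ is the subgraph induced on $S$. Sender neighborhood of node $k$: $N_k=\{v_{(w,b)}\in V:B_{kb}=1\}$. A neighborhood partition is a tuple $(\tilde N_1,\dots,\tilde N_n)$ with $\tilde N_i\subseteq N_i$, pairwise disjoint, union $V$. For a directed graph $H$ (loops disregarded): $\overline H$ has edge $(x,y)$, $x\ne y$, iff $(x,y)\notin E(H)$; a clique is a vertex set in which every ordered pair of distinct vertices is an edge (maximal if not properly contained in another clique); an independent set contains no edge in either direction; $\chi(H)$ is the minimum number of independent sets partitioning the vertex set ($0$ if empty). A cover of $V$ by elements of $\mathscr C$ is a collection of members of $\mathscr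 C$ whose union is $V$. *)

(* Defs.v *)
From HB Require Import structures.
From mathcomp Require Import all_boot all_order all_algebra.
Set Implicit Arguments. Unset Strict Implicit. Unset Printing Implicit Defensive.

(* A directed graph on a finite carrier T: a vertex set and an adjacency
   relation (only pairs of distinct vertices of the vertex set matter). *)
Record digraph (T : finType) := Digraph { dverts : {set T}; dadj : rel T }.

Section Graphs.
Variable T : finType.
Implicit Types (H : digraph T) (A S : {set T}).

Definition induced H S : digraph T := Digraph (S :&: dverts H) (dadj H).

Definition complement H : digraph T :=
  Digraph (dverts H) (fun x y => (x != y) && ~~ dadj H x y).

Definition clique H A : bool :=
  (A \subset dverts H) &&
  [forall x in A, forall y in A, (x != y) ==> dadj H x y].

Definition maximal_clique H A : bool := maxset (clique H) A.

Definition independent H A : bool :=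
  (A \subset dverts H) &&
  [forall x in A, forall y in A, (x != y) ==> ~~ dadj H x y].

Definition indep_partition_of H (k : nat) : bool :=
  [exists P : {set {set T}},
    [&& partition P (dverts H), [forall A in P, independent H A] & #|P| == k]].

Lemma indep_partition_exists H : exists k, indep_partition_of H k.
Proof.
exists #|preim_partition id (dverts H)|.
apply/existsP; exists (preim_partition id (dverts H)).
rewrite preim_partitionP eqxx andbT /=.
apply/forallP => A; apply/implyP => /imsetP [x Dx ->].
rewrite /independent; apply/andP; split.
  by apply/subsetP => y; rewrite inE => /andP [].
apply/forallP => y; apply/implyP; rewrite inE => /andP [_ /eqP <-].
apply/forallP => z; apply/implyP; rewrite inE => /andP [_ /eqP <-].
by rewrite eqxx.
Qed.

(* chromatic number: minimum number of independent sets partitioning the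
   vertex set (0 if empty, since the empty partition is then allowed) *)
Definition chi H : nat := ex_minn (indep_partition_exists H).

End Graphs.

Section EIC.
Variables (n m : nat) (R B : 'M['F_2]_(n, m)).

Definition vtx := ('I_n * 'I_m)%type.

Definition EIC_problem : Prop :=
  forall (u : 'I_n) (a : 'I_m), ~ (R u a = 1 /\ B u a = 1)%R.

Definition problem_verts : {set vtx} := [set p : vtx | R p.1 p.2 == 1%R].

Definition problem_adj : rel vtx :=
  fun x y => (B x.1 y.2 == 1%R) || (x.2 == y.2).

Definition problem_graph : digraph vtx :=
  Digraph problem_verts problem_adj.

Definition sender_nbhd (k : 'I_n) : {set vtx} :=
  [set p in problem_verts | B k p.2 == 1%R].

Definition nbhd_partition (Nt : 'I_n -> {set vtx}) : Prop :=
  [/\ forall i, Nt i \subset sender_nbhd i,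
      forall i j, i != j -> [disjoint Nt i & Nt j]
    & \bigcup_(i < n) Nt i = problem_verts].

Definition max_clique_family : {set {set vtx}} :=
  [set C : {set vtx} | [exists i : 'I_n,
     maximal_clique (induced problem_graph (sender_nbhd i)) C]].

Definition clique_cover (Cs : {set {set vtx}}) : Prop :=
  Cs \subset max_clique_family /\ \bigcup_(C in Cs) C = problem_verts.

End EIC.

(* Main.v *)
Require Import Defs.
From mathcomp Require Import all_boot all_order all_algebra.
Set Implicit Arguments. Unset Strict Implicit. Unset Printing Implicit Defensive.

Lemma chi_ge1 (T : finType) (H : digraph T) : dverts H != set0 -> 0 < chi H.
Proof.
rewrite /chi; case: ex_minnP => k /existsP [P /and3P [/and3P [/eqP cov _ _] _ /eqP cP]] _ ne.
rewrite -cP card_gt0; apply: contraNneq ne => P0.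
by rewrite -cov P0 /cover big_set0.
Qed.

Lemma chi_le (T : finType) (H : digraph T) k : indep_partition_of H k -> chi H <= k.
Proof. by rewrite /chi; case: ex_minnP => k' _; apply. Qed.

Lemma chi_le_f (T : finType) (H : digraph T) (f : T -> {set T}) :
  (forall x, x \in dverts H -> independent H [set y in dverts H | f x == f y]) ->
  chi H <= #|f @: dverts H|.
Proof.
move=> Hf.
apply: (leq_trans (chi_le (k:=#|preim_partition f (dverts H)|) _)).
  apply/existsP; exists (preim_partition f (dverts H)).
  rewrite preim_partitionP eqxx andbT /=.
  apply/forallP=> A; apply/implyP => /imsetP [x Dx ->]; exact: Hf.
rewrite /preim_partition /equivalence_partition.
rewrite (_ : [set _ | x in dverts H] =
   [set (fun S => [set y in dverts H | S == f y]) S | S in f @: dverts H]).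
  exact: leq_imset_card.
by rewrite -imset_comp.
Qed.

Section Main.
Variables (n m : nat) (R B : 'M['F_2]_(n, m)).
Variable Cs : {set {set vtx n m}}.
Hypothesis cover_Cs : clique_cover R B Cs.

Let V := problem_verts R.
Let G := problem_graph R B.
Definition Cv (v : vtx n m) := odflt set0 [pick C in Cs | v \in C].
Definition iC (C : {set vtx n m}) : option 'I_n :=
  [pick i | maximal_clique (induced G (sender_nbhd R B i)) C].
Definition Ntf (i : 'I_n) := [set v in V | iC (Cv v) == Some i].

Lemma Cv_spec v : v \in V -> Cv v \in Cs /\ v \in Cv v.
Proof.
move=> Vv; case: cover_Cs => _ cov.
move: Vv; rewrite /V -cov => /bigcupP [C CC vC].
rewrite /Cv; case: pickP => [C' /andP [] //|/(_ C)]; by rewrite CC vC.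
Qed.

Lemma iC_spec C : C \in Cs -> exists i, iC C = Some i.
Proof.
case: cover_Cs => sub _ CC.
move/subsetP: sub => /(_ _ CC); rewrite inE => /existsP [i Hi].
rewrite /iC; case: pickP => [j _|/(_ i)]; last by rewrite Hi.
by exists j.
Qed.

Lemma iC_clique C i : iC C = Some i ->
  C \subset sender_nbhd R B i /\
  [forall x in C, forall y in C, (x != y) ==> problem_adj B x y].
Proof.
rewrite /iC; case: pickP => [j Hj [<-]|//].
move/maxsetP: Hj => [/andP [sub cl] _]; split => //.
by apply: (subset_trans sub); rewrite /induced /= subsetIl.
Qed.

Lemma Nt_part : nbhd_partition R B Ntf.
Proof.
split.
- move=> i; apply/subsetP => v; rewrite inE => /andP [Vv /eqP Hi].
  have [_ vC] := Cv_spec Vv.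
  by have [/subsetP sub _] := iC_clique Hi; apply: sub.
- move=> i j ij; apply/pred0P => v /=; apply/negbTE/negP; rewrite !inE => /andP [/andP [_ /eqP ->] /andP [_ /eqP [e]]].
  by move: ij; rewrite e eqxx.
- apply/setP => v; apply/bigcupP/idP.
    by case=> i _; rewrite inE => /andP [].
  move=> Vv; have [CC _] := Cv_spec Vv; have [i Hi] := iC_spec CC.
  by exists i => //; rewrite inE Vv Hi eqxx.
Qed.

Let g C := chi (complement (induced G C)).

Lemma Nt_bound i : chi (complement (induced G (Ntf i))) <=
  \sum_(C in Cs | iC C == Some i) g C.
Proof.
have NV : Ntf i :&: V = Ntf i.
  by apply/setIidPl/subsetP => v; rewrite inE => /andP [].
apply: (leq_trans (chi_le_f (f := Cv) _)).
  move=> x; rewrite /= NV => Nx.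
  have Vx : x \in V by move: Nx; rewrite inE => /andP [].
  have [CC xC] := Cv_spec Vx.
  move: Nx; rewrite inE => /andP [_ /eqP Hi].
  have [_ /forallP cl] := iC_clique Hi.
  rewrite /independent /=; apply/andP; split; first by rewrite NV; apply/subsetP => y; rewrite inE => /andP [].
  apply/forallP => y; apply/implyP; rewrite inE => /andP [Ny /eqP ey].
  apply/forallP => z; apply/implyP; rewrite inE => /andP [Nz /eqP ez].
  apply/implyP => yz; rewrite yz /= negbK.
  have Vy : y \in V by move: Ny; rewrite inE => /andP [].
  have Vz : z \in V by move: Nz; rewrite inE => /andP [].
  have [_ yC] := Cv_spec Vy; have [_ zC] := Cv_spec Vz.
  rewrite -ey in yC; rewrite -ez in zC.
  by move: (cl y); rewrite yC => /forallP /(_ z); rewrite zC yz.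
rewrite /= NV -sum1_card.
apply: (@leq_trans (\sum_(C in Cv @: Ntf i) g C)).
  apply: leq_sum => C /imsetP [x Nx ->].
  apply: chi_ge1 => /=; apply/set0Pn; exists x.
  have Vx : x \in V by move: Nx; rewrite inE => /andP [].
  have [_ xC] := Cv_spec Vx.
  by rewrite inE xC.
rewrite [X in _ <= X](bigID (mem (Cv @: Ntf i))) /=.
rewrite (_ : \sum_(C | (C \in Cs) && (iC C == Some i) && (C \in Cv @: Ntf i)) g C
           = \sum_(C in Cv @: Ntf i) g C) ?leq_addr //.
apply: eq_bigl => C; apply/idP/idP; first by case/andP.
move=> CI; rewrite CI andbT; case/imsetP: CI => x Nx ->.
have Vx : x \in V by move: Nx; rewrite inE => /andP [].
have [CC _] := Cv_spec Vx.
by move: Nx; rewrite inE CC => /andP [_ ->].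
Qed.

Lemma main_ineq : \sum_(i < n) chi (complement (induced G (Ntf i))) <=
  \sum_(C in Cs) g C.
Proof.
apply: (@leq_trans (\sum_(i < n) \sum_(C in Cs | iC C == Some i) g C)).
  by apply: leq_sum => i _; apply: Nt_bound.
rewrite (exchange_big_dep xpredT) //=.
rewrite [X in _ <= X]big_mkcond /=.
apply: leq_sum => C _.
case: (C \in Cs) => /=; last by rewrite big_pred0.
case E: (iC C) => [j|].
  by rewrite (big_pred1 j) // => k; rewrite /= eq_sym.
by rewrite big_pred0.
Qed.

End Main.

Unset Implicit Arguments.

Theorem lemma7 (n m : nat) (R B : 'M['F_2]_(n, m)) :
  EIC_problem R B ->
  forall Cs : {set {set vtx n m}}, clique_cover R B Cs ->
  exists Nt : 'I_n -> {set vtx n m},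
    nbhd_partition R B Nt /\
    (\sum_(C in Cs) chi (complement (induced (problem_graph R B) C))
       >= \sum_(i < n) chi (complement (induced (problem_graph R B) (Nt i))))%N.
Proof.
move=> _ Cs cov.
exists (Ntf R B Cs); split; first exact: Nt_part.
exact: main_ineq.
Qed.
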